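(* Under the hypotheses of the two-shock setting ($v_\pm>0$, $u_->u_+$, intermediate state $(u_*^{\epsilon_1\epsilon_2},v_*^{\epsilon_1\epsilon_2})$), $$\lim_{\epsilon_1,\epsilon_2\to0}2\sqrt{\epsilon_1}\,v_*^{\epsilon_1\epsilon_2}=\frac{u_--u_+}{2}.$$
   Context: Perturbed Brio system: $u_t+(\tfrac12u^2+\tfrac12\epsilon_1v^2)_x=0$, $v_t+(uv-\epsilon_2v)_x=0$, $\epsilon_1,\epsilon_2>0$, $v>0$, with Riemann data $(u_-,v_-)$ for $x<0$, $(u_+,v_+)$ for $x>0$. A two-shock Riemann solution is one with an intermediate state $(u_*,v_* )$, $v_*>\max(v_-,v_+)$, $u_+<u_*<u_-$, such that $$u_*=u_-+(v_*-v_-)\frac{\epsilon_2-\sqrt{\epsilon_2^2+4\epsilon_1(v_*+v_-)^2}}{v_*+v_-},\qquad u_+=u_*+(v_+-v_* )\frac{\epsilon_2+\sqrt{\epsilon_2^2+4\epsilon_1(v_*+v_+)^2}}{v_*+v_+},$$ with shock speeds $\sigma_1=u_-+\frac{v_*(u_*-u_-)}{v_*-v_-}-\epsilon_2$ and $\sigma_2=u_++\frac{v_*(u_+-u_* )}{v_+-v_*}-\epsilon_2$. The limit is taken over parameters for which this solution exists. *)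

(* Defs.v *)
From Stdlib Require Import Reals.
Open Scope R_scope.

(* (us, vs) is the intermediate state of a two-shock Riemann solution of the
   perturbed Brio system with parameters e1 = epsilon_1, e2 = epsilon_2 and
   Riemann data (um, vm) (left) and (up, vp) (right). *)
Definition two_shock_state (e1 e2 um vm up vp us vs : R) : Prop :=
  vs > Rmax vm vp /\
  up < us < um /\
  us = um + (vs - vm) * ((e2 - sqrt (e2 ^ 2 + 4 * e1 * (vs + vm) ^ 2)) / (vs + vm)) /\
  up = us + (vp - vs) * ((e2 + sqrt (e2 ^ 2 + 4 * e1 * (vs + vp) ^ 2)) / (vs + vp)).

Definition sigma1 (e2 um vm us vs : R) : R := um + vs * (us - um) / (vs - vm) - e2.
Definition sigma2 (e2 up vp us vs : R) : R := up + vs * (up - us) / (vp - vs) - e2.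

(* Main.v *)
Require Import Defs.
From Stdlib Require Import Reals Lra Psatz.
Open Scope R_scope.

Lemma bnd (e2 s w d S X : R) : 0 < d -> d < w -> 0 <= e2 -> 0 <= s ->
  S = sqrt (e2 ^ 2 + 4 * (s*s) * w ^ 2) ->
  2*s*w <= S <= e2 + 2*s*w.
Proof.
  intros Hd Hw He Hs ->.
  assert (H0 : 0 <= 2*s*w) by (apply Rmult_le_pos; lra). split.
  - rewrite <- (sqrt_pow2 (2*s*w)) by exact H0. apply sqrt_le_1_alt. nra.
  - rewrite <- (sqrt_pow2 (e2 + 2*s*w)) by lra. apply sqrt_le_1_alt. nra.
Qed.

Theorem lemma5p2 (um vm up vp : R) :
  0 < vm -> 0 < vp -> up < um ->
  forall eta : R, eta > 0 ->
  exists delta : R, delta > 0 /\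
    forall e1 e2 us vs : R,
      0 < e1 < delta -> 0 < e2 < delta ->
      two_shock_state e1 e2 um vm up vp us vs ->
      Rabs (2 * sqrt e1 * vs - (um - up) / 2) < eta.
Proof.
  intros Hvm Hvp Hu eta Heta.
  set (k := eta / (2 * (vm + vp + 1))).
  assert (Hk : 0 < k) by (unfold k; apply Rdiv_lt_0_compat; lra).
  assert (Hk2 : k * (2 * (vm + vp + 1)) = eta) by (unfold k; field; lra).
  exists (Rmin 1 (k*k)). split.
  { apply Rmin_pos; nra. }
  intros e1 e2 us vs He1 He2 [Hmax [Hus [E1 E2]]].
  assert (Hd1 : Rmin 1 (k*k) <= 1) by apply Rmin_l.
  assert (Hd2 : Rmin 1 (k*k) <= k*k) by apply Rmin_r.
  assert (Hvs1 : vs > vm) by (eapply Rle_lt_trans; [apply Rmax_l|exact Hmax]).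
  assert (Hvs2 : vs > vp) by (eapply Rle_lt_trans; [apply Rmax_r|exact Hmax]).
  set (s := sqrt e1).
  assert (Hs0 : 0 < s) by (apply sqrt_lt_R0; lra).
  assert (Hss : s * s = e1) by (apply sqrt_sqrt; lra).
  assert (Hsk : s < k).
  { destruct (Rlt_le_dec s k) as [h|h]; auto. nra. }
  assert (He2k : e2 < k).
  { destruct (Rlt_le_dec e2 k) as [h|h]; auto.
    destruct (Rlt_le_dec k 1); nra. }
  set (S1 := sqrt (e2 ^ 2 + 4 * e1 * (vs + vm) ^ 2)) in E1.
  set (S2 := sqrt (e2 ^ 2 + 4 * e1 * (vs + vp) ^ 2)) in E2.
  assert (B1 : 2*s*(vs+vm) <= S1 <= e2 + 2*s*(vs+vm)).
  { apply (bnd e2 s (vs+vm) vm S1 0); try lra. unfold S1; rewrite Hss; reflexivity. }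
  assert (B2 : 2*s*(vs+vp) <= S2 <= e2 + 2*s*(vs+vp)).
  { apply (bnd e2 s (vs+vp) vp S2 0); try lra. unfold S2; rewrite Hss; reflexivity. }
  set (X1 := (vs - vm) * ((e2 - S1) / (vs + vm))) in E1.
  set (X2 := (vp - vs) * ((e2 + S2) / (vs + vp))) in E2.
  assert (HX1 : X1 * (vs + vm) = (vs - vm) * (e2 - S1)) by (unfold X1; field; lra).
  assert (HX2 : X2 * (vs + vp) = (vp - vs) * (e2 + S2)) by (unfold X2; field; lra).
  assert (P1 : 0 <= (vs-vm)*(e2 + 2*s*(vs+vm) - S1)) by (apply Rmult_le_pos; lra).
  assert (P2 : 0 <= (vs-vm)*(S1 - 2*s*(vs+vm))) by (apply Rmult_le_pos; lra).
  assert (P3 : 0 <= (vs-vp)*(e2 + 2*s*(vs+vp) - S2)) by (apply Rmult_le_pos; lra).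
  assert (P4 : 0 <= (vs-vp)*(S2 - 2*s*(vs+vp))) by (apply Rmult_le_pos; lra).
  assert (P5 : 0 <= e2*vm) by (apply Rmult_le_pos; lra).
  assert (P6 : 0 <= e2*vp) by (apply Rmult_le_pos; lra).
  assert (C1 : -(vs-vm)*2*s <= X1 <= -(vs-vm)*2*s + e2).
  { split.
    - apply (Rmult_le_reg_r (vs+vm)); [lra|]. rewrite HX1. nra.
    - apply (Rmult_le_reg_r (vs+vm)); [lra|]. rewrite HX1. nra. }
  assert (C2 : -(vs-vp)*2*s - 2*e2 <= X2 <= -(vs-vp)*2*s).
  { split.
    - apply (Rmult_le_reg_r (vs+vp)); [lra|]. rewrite HX2. nra.
    - apply (Rmult_le_reg_r (vs+vp)); [lra|]. rewrite HX2. nra. }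
  assert (Q1 : s*(vm+vp) <= k*(vm+vp)) by (apply Rmult_le_compat_r; lra).
  apply Rabs_def1; nra.
Qed.
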